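(* Let $K$ be a field and $m,n,r$ positive integers. Let $R=K[x_{ij}^k \mid 1\le i\le m,\ 1\le j\le n,\ 1\le k\le r]$ and let $I_{mn}^r\subseteq R$ be the ideal generated by all $2$-minors of the horizontal concatenation $H=(X_1\ \cdots\ X_r)$ and all $2$-minors of the vertical concatenation $V$ (the $X_k$ stacked on top of each other) of the matrices $X_k=(x_{ij}^k)_{1\le i\le m,1\le j\le n}$. Let $P_{mnr}$ be the poset which is the disjoint union of three pairwise incomparable chains $A_1,A_2,A_3$ with $|A_1|=m-1$, $|A_2|=n-1$, $|A_3|=r-1$, and let $L_{mnr}=\mathcal J(P_{mnr})$ be the distributive lattice of order ideals (downward closed subsets) of $P_{mnr}$, ordered by inclusion. Then $R/I_{mn}^r\cong K[L_{mnr}]$.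
   Context: For a finite lattice $L$, the Hibi ring is $K[L]=K[x_u\mid u\in L]/(x_{u_1}x_{u_2}-x_{u_1\wedge u_2}x_{u_1\vee u_2}\mid u_1,u_2\in L)$. In $\mathcal J(P)$ the meet is intersection and the join is union. *)

(* Defs.v *)
From HB Require Import structures.
From mathcomp Require Import all_boot all_order all_algebra.
From mathcomp Require Import mpoly.

Set Implicit Arguments.
Unset Strict Implicit.
Unset Printing Implicit Defensive.

Import GRing.Theory.
Local Open Scope ring_scope.

Definition ideal_gen (R : comNzRingType) (G : R -> Prop) : R -> Prop :=
  fun p => exists s : seq (R * R),
    (forall q, q \in s -> G q.2) /\ p = \sum_(q <- s) q.1 * q.2.

(* variable index (i, j, k) : row i < m, column j < n, matrix index k < r *)
Definition varT (m n r : nat) : finType := ('I_m * 'I_n * 'I_r)%type.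

Definition Rpoly (K : fieldType) (m n r : nat) := {mpoly K[#|varT m n r|]}.

Definition xv (K : fieldType) (m n r : nat) (i : 'I_m) (j : 'I_n) (k : 'I_r)
  : Rpoly K m n r := 'X_(enum_rank ((i, j, k) : varT m n r)).

(* horizontal concatenation H = (X_1 ... X_r): an m x (rn) matrix, whose
   columns are indexed by pairs (k, j); entry H_{i,(k,j)} = x_{ij}^k *)
Definition Hmx (K : fieldType) (m n r : nat) (i : 'I_m) (c : 'I_r * 'I_n)
  : Rpoly K m n r := xv K i c.2 c.1.

(* vertical concatenation V: an (rm) x n matrix, whose rows are indexed by
   pairs (k, i); entry V_{(k,i),j} = x_{ij}^k *)
Definition Vmx (K : fieldType) (m n r : nat) (rw : 'I_r * 'I_m) (j : 'I_n)
  : Rpoly K m n r := xv K rw.2 j rw.1.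

(* p is a 2-minor (rows a <> b, columns c <> d; up to the sign fixed by
   the order of the rows/columns) of the matrix with entries M *)
Definition is_2minor (T : comNzRingType) (Ro Co : eqType) (M : Ro -> Co -> T)
  (p : T) : Prop :=
  exists a b c d, a <> b /\ c <> d /\ p = M a c * M b d - M a d * M b c.

Definition I_mnr (K : fieldType) (m n r : nat) : Rpoly K m n r -> Prop :=
  ideal_gen (fun p => is_2minor (@Hmx K m n r) p \/ is_2minor (@Vmx K m n r) p).

Definition Pmnr (m n r : nat) : finType :=
  ('I_m.-1 + 'I_n.-1 + 'I_r.-1)%type.

Definition Ple (m n r : nat) (x y : Pmnr m n r) : bool :=
  match x, y with
  | inl (inl a), inl (inl b) => (a <= b)%N
  | inl (inr a), inl (inr b) => (a <= b)%N
  | inr a, inr b => (a <= b)%N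
  | _, _ => false
  end.

Definition is_order_ideal (m n r : nat) (A : {set Pmnr m n r}) : bool :=
  [forall x, forall y, (Ple x y && (y \in A)) ==> (x \in A)].

Definition Lmnr (m n r : nat) : finType :=
  { A : {set Pmnr m n r} | is_order_ideal A }.

Definition Spoly (K : fieldType) (m n r : nat) := {mpoly K[#|Lmnr m n r|]}.

Definition xL (K : fieldType) (m n r : nat) (u : Lmnr m n r) : Spoly K m n r :=
  'X_(enum_rank u).

(* Hibi relations x_{u1} x_{u2} - x_{u1 /\ u2} x_{u1 \/ u2}, where in J(P)
   the meet is the intersection and the join is the union *)
Definition hibi_rel (K : fieldType) (m n r : nat) (p : Spoly K m n r) : Prop :=
  exists u1 u2 w1 w2 : Lmnr m n r,
    val w1 = val u1 :&: val u2 /\ val w2 = val u1 :|: val u2 /\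
    p = xL K u1 * xL K u2 - xL K w1 * xL K w2.

Definition J_hibi (K : fieldType) (m n r : nat) : Spoly K m n r -> Prop :=
  ideal_gen (@hibi_rel K m n r).

(* A/I ~= B/J as K-algebras, presented by K-algebra maps between the
   (free) polynomial rings A and B that respect the ideals and induce
   mutually inverse maps on the quotients. *)
Definition quot_alg_iso (K : fieldType) (A B : comAlgType K)
  (I : A -> Prop) (J : B -> Prop) : Prop :=
  exists (f : {lrmorphism A -> B}) (g : {lrmorphism B -> A}),
    (forall p, I p -> J (f p)) /\ (forall q, J q -> I (g q)) /\
    (forall p, I (g (f p) - p)) /\ (forall q, J (f (g q) - q)).

(* Main.v *)
Require Import Defs.
From HB Require Import structures.
From mathcomp Require Import all_boot all_order all_algebra.
From mathcomp Require Import mpoly.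
Set Implicit Arguments.
Unset Strict Implicit.
Unset Printing Implicit Defensive.
Import GRing.Theory.
Local Open Scope ring_scope.


Lemma ideal0 (R : comNzRingType) (G : R -> Prop) : ideal_gen G 0.
Proof. by exists [::]; rewrite big_nil. Qed.

Lemma ideal_el (R : comNzRingType) (G : R -> Prop) p : G p -> ideal_gen G p.
Proof.
move=> Gp; exists [:: (1, p)]; split; first by move=> q; rewrite inE => /eqP ->.
by rewrite big_seq1 mul1r.
Qed.

Lemma idealD (R : comNzRingType) (G : R -> Prop) p q :
  ideal_gen G p -> ideal_gen G q -> ideal_gen G (p + q).
Proof.
move=> [s [Hs ->]] [t [Ht ->]]; exists (s ++ t); split; last by rewrite big_cat.
by move=> x; rewrite mem_cat => /orP [/Hs|/Ht].
Qed.

Lemma idealM (R : comNzRingType) (G : R -> Prop) c p :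
  ideal_gen G p -> ideal_gen G (c * p).
Proof.
move=> [s [Hs ->]]; exists [seq (c * x.1, x.2) | x <- s]; split.
  by move=> x; case/mapP => y ys -> /=; exact: Hs.
by rewrite big_map mulr_sumr; apply: eq_bigr => x _; rewrite mulrA.
Qed.

Lemma idealN (R : comNzRingType) (G : R -> Prop) p :
  ideal_gen G p -> ideal_gen G (- p).
Proof. by move=> h; rewrite -mulN1r; apply: idealM. Qed.

Lemma idealB (R : comNzRingType) (G : R -> Prop) p q :
  ideal_gen G p -> ideal_gen G q -> ideal_gen G (p - q).
Proof. by move=> hp hq; apply: idealD => //; apply: idealN. Qed.

Lemma ideal_trans (R : comNzRingType) (G : R -> Prop) a b c :
  ideal_gen G (a - b) -> ideal_gen G (b - c) -> ideal_gen G (a - c).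
Proof.
move=> h1 h2; have -> : a - c = (a - b) + (b - c) by rewrite addrA subrK.
exact: idealD.
Qed.

Lemma ideal_sub3 (R : comNzRingType) (G : R -> Prop) a b c :
  ideal_gen G (a - c) -> ideal_gen G (b - c) -> ideal_gen G (a - b).
Proof.
move=> h1 h2; apply: ideal_trans h1 _.
by rewrite -opprB; apply: idealN.
Qed.

Lemma ideal_map (R S : comNzRingType) (h : {rmorphism R -> S}) (G : R -> Prop)
  (G' : S -> Prop) :
  (forall q, G q -> ideal_gen G' (h q)) ->
  forall p, ideal_gen G p -> ideal_gen G' (h p).
Proof.
move=> hG p [s [Hs ->]]; rewrite rmorph_sum.
elim: s Hs => [|x s IH] Hs; first by rewrite big_nil; apply: ideal0.
rewrite big_cons; apply: idealD.
  by rewrite rmorphM; apply: idealM; apply: hG; apply: Hs; rewrite inE eqxx.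
by apply: IH => q qs; apply: Hs; rewrite inE qs orbT.
Qed.

Lemma card_lt p i : (i <= p)%N -> #|[set a : 'I_p | (a < i)%N]| = i.
Proof.
move=> ip.
have -> : [set a : 'I_p | (a < i)%N] = [set widen_ord ip b | b in 'I_i].
  apply/setP => a; rewrite inE; apply/idP/imsetP.
    by move=> ai; exists (Ordinal ai) => //; apply: val_inj.
  by move=> [b _ ->] /=.
rewrite card_imset ?card_ord //.
by move=> x y /(congr1 val) /= /val_inj.
Qed.

Lemma down_card p (S : {set 'I_p}) :
  (forall a b : 'I_p, (a <= b)%N -> b \in S -> a \in S) ->
  forall a : 'I_p, (a \in S) = (a < #|S|)%N.
Proof.
move=> dS a; apply/idP/idP => aS.
  rewrite -(card_lt (ltn_ord a)); apply: subset_leq_card.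
  by apply/subsetP => b; rewrite inE => ba; apply: dS aS.
apply: contraTT aS => naS; rewrite -leqNgt.
rewrite -(card_lt (ltnW (ltn_ord a))); apply: subset_leq_card.
apply/subsetP => b bS; rewrite inE ltnNge; apply/negP => ab.
by move/negP: naS; apply; apply: dS ab bS.
Qed.


Definition Fn (m n r : nat) (i j k : nat) : {set Pmnr m n r} :=
  [set x : Pmnr m n r | match x with
           | inl (inl a) => (nat_of_ord a < i)%N
           | inl (inr b) => (nat_of_ord b < j)%N
           | inr c => (nat_of_ord c < k)%N end].

Lemma Fn_ideal m n r i j k : is_order_ideal (@Fn m n r i j k).
Proof.
apply/forallP => x; apply/forallP => y; apply/implyP => /andP [].
by case: x => [[a|a]|a]; case: y => [[b|b]|b] //=; rewrite !inE;
  apply: leq_ltn_trans.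
Qed.

Definition LN m n r i j k : Lmnr m n r := exist _ (@Fn m n r i j k) (Fn_ideal _ _ _ _ _ _).

Lemma FnI m n r i j k i' j' k' :
  @Fn m n r i j k :&: Fn m n r i' j' k' = Fn m n r (minn i i') (minn j j') (minn k k').
Proof. by apply/setP => x; rewrite !inE; case: x => [[a|a]|a]; rewrite leq_min. Qed.

Lemma FnU m n r i j k i' j' k' :
  @Fn m n r i j k :|: Fn m n r i' j' k' = Fn m n r (maxn i i') (maxn j j') (maxn k k').
Proof. by apply/setP => x; rewrite !inE; case: x => [[a|a]|a]; rewrite leq_max. Qed.

Definition cnt1 m n r (A : Lmnr m.+1 n.+1 r.+1) : 'I_m.+1 :=
  inord #|[set a : 'I_m | (inl (inl a) : Pmnr m.+1 n.+1 r.+1) \in val A]|.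
Definition cnt2 m n r (A : Lmnr m.+1 n.+1 r.+1) : 'I_n.+1 :=
  inord #|[set a : 'I_n | (inl (inr a) : Pmnr m.+1 n.+1 r.+1) \in val A]|.
Definition cnt3 m n r (A : Lmnr m.+1 n.+1 r.+1) : 'I_r.+1 :=
  inord #|[set a : 'I_r | (inr a : Pmnr m.+1 n.+1 r.+1) \in val A]|.

Lemma max_card' p (S : {set 'I_p}) : (#|S| <= p)%N.
Proof. by rewrite -[X in (_ <= X)%N]card_ord max_card. Qed.

Definition Gv m n r (A : Lmnr m.+1 n.+1 r.+1) : varT m.+1 n.+1 r.+1 :=
  (cnt1 A, cnt2 A, cnt3 A).

Lemma GvLN m n r (v : varT m.+1 n.+1 r.+1) :
  Gv (LN m.+1 n.+1 r.+1 v.1.1 v.1.2 v.2) = v.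
Proof.
case: v => [[i j] k]; rewrite /Gv /cnt1 /cnt2 /cnt3 /=.
congr (_, _, _); apply: val_inj; rewrite /= inordK ?ltnS ?max_card' //.
- apply: etrans (card_lt (ltn_ord i : (i <= m)%N)); apply: eq_card => a; rewrite !inE.
  by [].
- apply: etrans (card_lt (ltn_ord j : (j <= n)%N)); apply: eq_card => a; rewrite !inE.
  by [].
- apply: etrans (card_lt (ltn_ord k : (k <= r)%N)); apply: eq_card => a; rewrite !inE.
  by [].
Qed.

Lemma ideal_down m n r (A : Lmnr m n r) x y : Ple x y -> y \in val A -> x \in val A.
Proof.
move=> xy yA; case: A yA => A /= /forallP /(_ x) /forallP /(_ y) /implyP hA yA.
by apply: hA; rewrite xy yA.
Qed.

Lemma LNGv m n r (A : Lmnr m.+1 n.+1 r.+1) :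
  LN m.+1 n.+1 r.+1 (Gv A).1.1 (Gv A).1.2 (Gv A).2 = A.
Proof.
apply: val_inj; apply/setP => x; rewrite /= /cnt1 /cnt2 /cnt3 inE.
case: x => [[a|a]|a]; rewrite inordK ?ltnS ?max_card' //.
- rewrite -(@down_card _ [set a : 'I_m | (inl (inl a) : Pmnr m.+1 n.+1 r.+1) \in val A]) ?inE //.
  by move=> b c bc; rewrite !inE; apply: ideal_down.
- rewrite -(@down_card _ [set a : 'I_n | (inl (inr a) : Pmnr m.+1 n.+1 r.+1) \in val A]) ?inE //.
  by move=> b c bc; rewrite !inE; apply: ideal_down.
- rewrite -(@down_card _ [set a : 'I_r | (inr a : Pmnr m.+1 n.+1 r.+1) \in val A]) ?inE //.
  by move=> b c bc; rewrite !inE; apply: ideal_down.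
Qed.


Definition ftup (K : fieldType) m n r : #|varT m.+1 n.+1 r.+1|.-tuple (Spoly K m.+1 n.+1 r.+1) :=
  [tuple xL K (LN m.+1 n.+1 r.+1 (enum_val i).1.1 (enum_val i).1.2 (enum_val i).2)
   | i < #|varT m.+1 n.+1 r.+1|].

Definition gtup (K : fieldType) m n r : #|Lmnr m.+1 n.+1 r.+1|.-tuple (Rpoly K m.+1 n.+1 r.+1) :=
  [tuple (let v := Gv (enum_val i) in xv K v.1.1 v.1.2 v.2)
   | i < #|Lmnr m.+1 n.+1 r.+1|].

Definition fmap (K : fieldType) m n r : Rpoly K m.+1 n.+1 r.+1 -> Spoly K m.+1 n.+1 r.+1 :=
  comp_mpoly (ftup K m n r).
Definition gmap (K : fieldType) m n r : Spoly K m.+1 n.+1 r.+1 -> Rpoly K m.+1 n.+1 r.+1 :=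
  comp_mpoly (gtup K m n r).

Arguments fmap K m n r _ : clear implicits.
Arguments gmap K m n r _ : clear implicits.

Lemma fX K m n r (i : 'I_m.+1) (j : 'I_n.+1) (k : 'I_r.+1) :
  fmap K m n r (xv K i j k) = xL K (LN m.+1 n.+1 r.+1 i j k).
Proof. by rewrite /fmap /xv comp_mpolyXU -tnth_nth tnth_mktuple enum_rankK. Qed.

Lemma gX K m n r (u : Lmnr m.+1 n.+1 r.+1) :
  gmap K m n r (xL K u) = xv K (Gv u).1.1 (Gv u).1.2 (Gv u).2.
Proof. by rewrite /gmap /xL comp_mpolyXU -tnth_nth tnth_mktuple enum_rankK. Qed.

Lemma comp_id_lem (K : fieldType) N M (lq : N.-tuple {mpoly K[M]}) (lq' : M.-tuple {mpoly K[N]}) :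
  (forall i : 'I_N, comp_mpoly lq' (comp_mpoly lq 'X_i) = 'X_i) ->
  forall p, comp_mpoly lq' (comp_mpoly lq p) = p.
Proof.
move=> hX; elim/mpolyind => [|c mm p _ _ IH]; first by rewrite !comp_mpoly0.
rewrite !comp_mpolyD IH !comp_mpolyZ comp_mpolyX; congr (_ *: _ + _).
rewrite mpolyXE_id (rmorph_prod (comp_mpoly lq')).
by apply: eq_bigr => i _; rewrite (rmorphXn (comp_mpoly lq')) /= (tnth_nth 0) -comp_mpolyXU hX.
Qed.



Definition omin p (a b : 'I_p) : 'I_p := if (a <= b)%N then a else b.
Definition omax p (a b : 'I_p) : 'I_p := if (a <= b)%N then b else a.

Lemma ominE p (a b : 'I_p) : nat_of_ord (omin a b) = minn a b.
Proof. by rewrite /omin; case: leqP. Qed.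
Lemma omaxE p (a b : 'I_p) : nat_of_ord (omax a b) = maxn a b.
Proof. by rewrite /omax; case: leqP. Qed.

Lemma minorH K m n r a b c d :
  I_mnr (@Hmx K m n r a c * Hmx K b d - Hmx K a d * Hmx K b c).
Proof.
case: (eqVneq a b) => [<-|ab]; first by rewrite [Hmx K a d * _]mulrC subrr; apply: ideal0.
case: (eqVneq c d) => [<-|cd]; first by rewrite subrr; apply: ideal0.
by apply: ideal_el; left; exists a, b, c, d; split; [apply/eqP|split; [apply/eqP|]].
Qed.

Lemma minorV K m n r a b c d :
  I_mnr (@Vmx K m n r a c * Vmx K b d - Vmx K a d * Vmx K b c).
Proof.
case: (eqVneq a b) => [<-|ab]; first by rewrite [Vmx K a d * _]mulrC subrr; apply: ideal0.
case: (eqVneq c d) => [<-|cd]; first by rewrite subrr; apply: ideal0.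
by apply: ideal_el; right; exists a, b, c, d; split; [apply/eqP|split; [apply/eqP|]].
Qed.

Lemma swapi K m n r i j k i' j' k' :
  I_mnr (@xv K m n r i j k * xv K i' j' k' - xv K i' j k * xv K i j' k').
Proof.
have := @minorH K m n r i i' (k, j) (k', j'); rewrite /Hmx /=.
by rewrite [xv K i' j k * _]mulrC.
Qed.

Lemma swapj K m n r i j k i' j' k' :
  I_mnr (@xv K m n r i j k * xv K i' j' k' - xv K i j' k * xv K i' j k').
Proof. by have := @minorV K m n r (k, i) (k', i') j j'; rewrite /Vmx /=. Qed.

Lemma swapk K m n r i j k i' j' k' :
  I_mnr (@xv K m n r i j k * xv K i' j' k' - xv K i j k' * xv K i' j' k).
Proof.
apply: ideal_trans (swapi _ _ _ _ _ _ _) _.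
by rewrite [xv K i j k' * _]mulrC; apply: swapj.
Qed.

Lemma segI K m n r i j k i' j' k' :
  I_mnr (@xv K m n r i j k * xv K i' j' k'
         - xv K (omin i i') (omin j j') (omin k k') * xv K (omax i i') (omax j j') (omax k k')).
Proof.
apply: (@ideal_trans _ _ _ (xv K (omin i i') j k * xv K (omax i i') j' k')).
  rewrite /omin /omax; case: ifP => _; first by rewrite subrr; apply: ideal0.
  exact: swapi.
apply: (@ideal_trans _ _ _ (xv K (omin i i') (omin j j') k * xv K (omax i i') (omax j j') k')).
  move: (omin i i') (omax i i') => a b.
  rewrite /omin /omax; case: ifP => _; first by rewrite subrr; apply: ideal0.
  exact: swapj.
move: (omin i i') (omax i i') (omin j j') (omax j j') => a b c d.
rewrite /omin /omax; case: ifP => _; first by rewrite subrr; apply: ideal0.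
exact: swapk.
Qed.


Definition fL (K : fieldType) m n r : {lrmorphism Rpoly K m.+1 n.+1 r.+1 -> Spoly K m.+1 n.+1 r.+1} :=
  fmap K m n r.
Definition gL (K : fieldType) m n r : {lrmorphism Spoly K m.+1 n.+1 r.+1 -> Rpoly K m.+1 n.+1 r.+1} :=
  gmap K m n r.

Lemma fLX K m n r (i : 'I_m.+1) (j : 'I_n.+1) (k : 'I_r.+1) :
  fL K m n r (xv K i j k) = xL K (LN m.+1 n.+1 r.+1 i j k).
Proof. exact: fX. Qed.

Lemma gLX K m n r (u : Lmnr m.+1 n.+1 r.+1) :
  gL K m n r (xL K u) = xv K (Gv u).1.1 (Gv u).1.2 (Gv u).2.
Proof. exact: gX. Qed.

Lemma fX' K m n r (i : 'I_m.+1) (j : 'I_n.+1) (k : 'I_r.+1) :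
  comp_mpoly (ftup K m n r) (xv K i j k) = xL K (LN m.+1 n.+1 r.+1 i j k).
Proof. exact: fX. Qed.

Lemma gX' K m n r (u : Lmnr m.+1 n.+1 r.+1) :
  comp_mpoly (gtup K m n r) (xL K u) = xv K (Gv u).1.1 (Gv u).1.2 (Gv u).2.
Proof. exact: gX. Qed.

Lemma segJ K m n r i j k i' j' k' :
  J_hibi (xL K (LN m n r i j k) * xL K (LN m n r i' j' k')
    - xL K (LN m n r (minn i i') (minn j j') (minn k k'))
      * xL K (LN m n r (maxn i i') (maxn j j') (maxn k k'))).
Proof.
apply: ideal_el; do 4 eexists; split; last split; last by reflexivity.
  by rewrite /= FnI.
by rewrite /= FnU.
Qed.

Lemma fI K m n r q :
  (is_2minor (@Hmx K m.+1 n.+1 r.+1) q \/ is_2minor (@Vmx K m.+1 n.+1 r.+1) q) ->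
  J_hibi (fL K m n r q).
Proof.
case=> [[a [b [c [d [_ [_ ->]]]]]] | [a [b [c [d [_ [_ ->]]]]]]];
  rewrite rmorphB !rmorphM /Hmx /Vmx /fL /= !fX';
  apply: ideal_sub3 (segJ _ _ _ _ _ _ _ _ _ _) _.
  by rewrite (minnC (c.2 : nat)) (minnC (c.1 : nat)) (maxnC (c.2 : nat)) (maxnC (c.1 : nat));
     apply: segJ.
by rewrite (minnC (c : nat)) (maxnC (c : nat));
   apply: segJ.
Qed.

Lemma gJ K m n r q : hibi_rel q -> I_mnr (gL K m n r q).
Proof.
case=> u1 [u2 [w1 [w2 [e1 [e2 ->]]]]].
rewrite -(LNGv u1) -(LNGv u2) in e1 e2 *.
move: (Gv u1) (Gv u2) e1 e2 => [[i j] k] [[i' j'] k'] /= e1 e2.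
have -> : w1 = LN m.+1 n.+1 r.+1 (omin i i') (omin j j') (omin k k').
  by apply: val_inj => /=; rewrite e1 FnI !ominE.
have -> : w2 = LN m.+1 n.+1 r.+1 (omax i i') (omax j j') (omax k k').
  by apply: val_inj => /=; rewrite e2 FnU !omaxE.
rewrite rmorphB !rmorphM /gL /= !gX'.
rewrite !(GvLN (m := m) (n := n) (r := r) (_, _, _)) /=.
exact: segI.
Qed.

Unset Implicit Arguments.
Local Close Scope ring_scope.

Theorem corollary3p5 (K : fieldType) (m n r : nat) :
  (0 < m)%N -> (0 < n)%N -> (0 < r)%N ->
  quot_alg_iso (@I_mnr K m n r) (@J_hibi K m n r).
Proof.
case: m => // m _; case: n => // n _; case: r => // r _.
exists (fL K m n r), (gL K m n r); split; last split; last split.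
- exact: ideal_map (@fI K m n r).
- exact: ideal_map (@gJ K m n r).
- move=> p; rewrite /fL /gL /=.
  rewrite (@comp_id_lem K _ _ (ftup K m n r) (gtup K m n r)) ?subrr; first exact: ideal0.
  move=> i; rewrite -(enum_valK i); case: (enum_val i) => [[a b] c].
  by rewrite -[mpolyX _ _]/(xv K a b c) fX' gX' (GvLN (_, _, _)).
- move=> p; rewrite /fL /gL /=.
  rewrite (@comp_id_lem K _ _ (gtup K m n r) (ftup K m n r)) ?subrr; first exact: ideal0.
  move=> i; rewrite -(enum_valK i); move: (enum_val i) => u.
  by rewrite -[mpolyX _ _]/(xL K u) gX' fX' LNGv.
Qed.
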